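(* Let $N\ge1$. The group $H'_{\mathbb{Z}/N\mathbb{Z}}=\bar\Gamma(2)/\Phi''_N$ has exponent $N$; in other words, for every $\gamma\in\bar\Gamma(2)$, one has $\gamma^N\in\Phi''_N$.
   Context: Let $\bar\Gamma(2)=\Gamma(2)/\{\pm1\}\subset\mathrm{PSL}_2(\mathbb{Z})$, freely generated by the classes $A$ of $\begin{pmatrix}1&2\\0&1\end{pmatrix}$ and $B$ of $\begin{pmatrix}1&0\\2&1\end{pmatrix}$; $C=ABA^{-1}B^{-1}$. Set $N'=N$ if $N$ is odd and $N'=N/2$ if $N$ even; set $N''=N'$ if $N$ is prime to $3$ and $N''=N'/3$ otherwise. $\Phi_N$ is the kernel of $\bar\Gamma(2)\to(\mathbb{Z}/N\mathbb{Z})^2$, $A\mapsto(1,0)$, $B\mapsto(0,1)$. Let $\bar\psi:\Phi_N\to(\mathbb{Z}/N'\mathbb{Z})^3$ be the group homomorphism which vanishes on $A^N$ and $B^N$ and satisfies $\bar\psi(A^iB^jC^kB^{-j}A^{-i})=(-ik,-jk,k)$ for all $i,j,k\in\mathbb{Z}$. Then $\Phi''_N$ is the kernel of the composition of $\bar\psi$ with the map $(\mathbb{Z}/N'\mathbb{Z})^3\to(\mathbb{Z}/N''\mathbb{Z})^2\times\mathbb{Z}/N'\mathbb{Z}$ reducing the first two coordinates modulo $N''$; it is a normal subgroup of $\bar\Gamma(2)$. *)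

(* Defs.v *)
From HB Require Import structures.
From mathcomp Require Import all_boot all_order all_algebra.
Set Implicit Arguments. Unset Strict Implicit. Unset Printing Implicit Defensive.
Import Order.TTheory GRing.Theory Num.Theory.
Local Open Scope ring_scope.

(* Gamma(2) is realized as a set of 2x2 integer matrices (in the unit ring
   'M[int]_2); \bar\Gamma(2) = Gamma(2)/{±1} is handled by requiring all maps
   defined on it to be invariant under M |-> -M. *)

Definition mxA : 'M[int]_2 := \matrix_(i < 2, j < 2)
  (if (val i == 0%N) && (val j == 1%N) then 2 else (i == j)%:Z).
Definition mxB : 'M[int]_2 := \matrix_(i < 2, j < 2)
  (if (val i == 1%N) && (val j == 0%N) then 2 else (i == j)%:Z).
Definition mxC : 'M[int]_2 := mxA * mxB * mxA^-1 * mxB^-1.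

Definition inGamma2 (M : 'M[int]_2) : bool :=
  (\det M == 1) && [forall i, forall j, (2 %| M i j - (i == j)%:Z)%Z].

Definition Nprime (N : nat) : nat := if odd N then N else N./2.
Definition Nsecond (N : nat) : nat :=
  if coprime N 3 then Nprime N else (Nprime N %/ 3)%N.

Definition eqmod (m : nat) (a b : int) : Prop := (a = b %[mod m%:Z])%Z.

(* phi : \bar\Gamma(2) -> (Z/NZ)^2, represented with integer lifts:
   a homomorphism modulo N, invariant under sign, A |-> (1,0), B |-> (0,1). *)
Definition is_phi (N : nat) (phi : 'M[int]_2 -> int * int) : Prop :=
  [/\ forall x y, inGamma2 x -> inGamma2 y ->
        eqmod N (phi (x * y)).1 ((phi x).1 + (phi y).1) /\
        eqmod N (phi (x * y)).2 ((phi x).2 + (phi y).2),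
      forall x, inGamma2 x ->
        eqmod N (phi (- x)).1 (phi x).1 /\ eqmod N (phi (- x)).2 (phi x).2,
      eqmod N (phi mxA).1 1 /\ eqmod N (phi mxA).2 0 &
      eqmod N (phi mxB).1 0 /\ eqmod N (phi mxB).2 1].

Definition inPhi (N : nat) (phi : 'M[int]_2 -> int * int) (x : 'M[int]_2) : Prop :=
  inGamma2 x /\ eqmod N (phi x).1 0 /\ eqmod N (phi x).2 0.

Definition eqmod3 (m : nat) (u v : int * int * int) : Prop :=
  [/\ eqmod m u.1.1 v.1.1, eqmod m u.1.2 v.1.2 & eqmod m u.2 v.2].

Definition is_psibar (N : nat) (phi : 'M[int]_2 -> int * int)
    (psi : 'M[int]_2 -> int * int * int) : Prop :=
  let N' := Nprime N in
  [/\ forall x y, inPhi N phi x -> inPhi N phi y ->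
        eqmod3 N' (psi (x * y))
          ((psi x).1.1 + (psi y).1.1, (psi x).1.2 + (psi y).1.2,
           (psi x).2 + (psi y).2),
      forall x, inPhi N phi x -> eqmod3 N' (psi (- x)) (psi x),
      eqmod3 N' (psi (mxA ^+ N)) (0, 0, 0),
      eqmod3 N' (psi (mxB ^+ N)) (0, 0, 0) &
      forall i j k : int,
        eqmod3 N' (psi (mxA ^ i * mxB ^ j * mxC ^ k * mxB ^ (- j) * mxA ^ (- i)))
          (- (i * k), - (j * k), k)].

Definition inPhi2 (N : nat) (phi : 'M[int]_2 -> int * int)
    (psi : 'M[int]_2 -> int * int * int) (x : 'M[int]_2) : Prop :=
  [/\ inPhi N phi x, eqmod (Nsecond N) (psi x).1.1 0,
      eqmod (Nsecond N) (psi x).1.2 0 & eqmod (Nprime N) (psi x).2 0].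

(* Main.v *)
Require Import Defs.
From HB Require Import structures.
From mathcomp Require Import all_boot all_order all_algebra.
From mathcomp Require Import zify ring lra.
Import Order.TTheory GRing.Theory Num.Theory.
Local Open Scope ring_scope.
Set Implicit Arguments. Unset Strict Implicit. Unset Printing Implicit Defensive.

Definition mk (a b c d : int) : 'M[int]_2 :=
  \matrix_(i < 2, j < 2) if val i == 0%N then (if val j == 0%N then a else b)
                         else (if val j == 0%N then c else d).

Lemma mk_mul a b c d a' b' c' d' :
  mk a b c d * mk a' b' c' d' =
  mk (a*a'+b*c') (a*b'+b*d') (c*a'+d*c') (c*b'+d*d').
Proof.
apply/matrixP=> i j; rewrite !mxE !big_ord_recl big_ord0 !mxE /=.
by case: i => [[|[|i]] Hi] //; case: j => [[|[|j]] Hj] //=; rewrite addr0.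
Qed.

Lemma det_mk a b c d : \det (mk a b c d) = a * d - b * c.
Proof.
rewrite (expand_det_row _ ord0) !big_ord_recl big_ord0 /cofactor !mxE /=.
by rewrite !det_mx11 !mxE /= expr0 expr1; ring.
Qed.

Lemma mk_eta (M : 'M[int]_2) :
  M = mk (M ord0 ord0) (M ord0 ord_max) (M ord_max ord0) (M ord_max ord_max).
Proof.
apply/matrixP=> i j; rewrite !mxE.
case: i => [[|[|i]] Hi] //; case: j => [[|[|j]] Hj] //=;
by congr (M _ _); apply: val_inj.
Qed.

Lemma mk1 : mk 1 0 0 1 = 1.
Proof.
apply/matrixP=> i j; rewrite !mxE.
by case: i => [[|[|i]] Hi] //; case: j => [[|[|j]] Hj].
Qed.

Lemma mkN a b c d : - mk a b c d = mk (-a) (-b) (-c) (-d).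
Proof.
apply/matrixP=> i j; rewrite !mxE.
by case: i => [[|[|i]] Hi] //; case: j => [[|[|j]] Hj].
Qed.

Lemma mk_unit a b c d : a * d - b * c = 1 -> mk a b c d \is a GRing.unit.
Proof. by move=> h; rewrite unitmxE det_mk h unitr1. Qed.

Lemma mk_inv a b c d : a * d - b * c = 1 -> (mk a b c d)^-1 = mk d (-b) (-c) a.
Proof.
move=> h.
have U := mk_unit h.
have E : mk a b c d * mk d (-b) (-c) a = 1.
  rewrite mk_mul -mk1; congr mk; try ring; by rewrite -h; ring.
by rewrite -[RHS](mulKr U) E mulr1.
Qed.

Lemma mxAE : mxA = mk 1 2 0 1.
Proof.
apply/matrixP=> i j; rewrite !mxE.
by case: i => [[|[|i]] Hi] //; case: j => [[|[|j]] Hj].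
Qed.

Lemma mxBE : mxB = mk 1 0 2 1.
Proof.
apply/matrixP=> i j; rewrite !mxE.
by case: i => [[|[|i]] Hi] //; case: j => [[|[|j]] Hj].
Qed.

Lemma powA (k : int) : mxA ^ k = mk 1 (2 * k) 0 1.
Proof.
have Hn : forall n : nat, mxA ^+ n = mk 1 (2 * n%:Z) 0 1.
  elim=> [|n IH]; first by rewrite expr0 -mk1 mulr0.
  by rewrite exprSr IH mxAE mk_mul; congr mk; rewrite ?intS; ring.
case: k => n; first exact: Hn.
rewrite NegzE /exprz /= Hn mk_inv; last by ring.
by congr mk; ring.
Qed.

Lemma powB (k : int) : mxB ^ k = mk 1 0 (2 * k) 1.
Proof.
have Hn : forall n : nat, mxB ^+ n = mk 1 0 (2 * n%:Z) 1.
  elim=> [|n IH]; first by rewrite expr0 -mk1 mulr0.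
  by rewrite exprSr IH mxBE mk_mul; congr mk; rewrite ?intS; ring.
case: k => n; first exact: Hn.
rewrite NegzE /exprz /= Hn mk_inv; last by ring.
by congr mk; ring.
Qed.

Lemma mxCE : mxC = mk 21 (-8) 8 (-3).
Proof.
rewrite /mxC mxAE mxBE !mk_inv; try by ring.
by rewrite !mk_mul; congr mk; ring.
Qed.

Lemma powCm1 : mxC ^ (-1) = mk (-3) 8 (-8) 21.
Proof. by rewrite /exprz /= expr1 mxCE mk_inv //; congr mk; ring. Qed.
Lemma powC1 : mxC ^ 1 = mk 21 (-8) 8 (-3).
Proof. by rewrite /exprz /= expr1 mxCE. Qed.
Lemma G2mk a b c d : inGamma2 (mk a b c d) <->
  [/\ a*d - b*c = 1, (2 %| a - 1)%Z, (2 %| b)%Z, (2 %| c)%Z & (2 %| d - 1)%Z].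
Proof.
rewrite /inGamma2 det_mk; split.
  case/andP=> /eqP h /forallP H.
  have H00 := forallP (H ord0) ord0; have H01 := forallP (H ord0) ord_max.
  have H10 := forallP (H ord_max) ord0; have H11 := forallP (H ord_max) ord_max.
  rewrite !mxE /= in H00 H01 H10 H11.
  by split=> //; rewrite ?subr0 in H01 H10.
case=> h h1 h2 h3 h4; apply/andP; split; first by apply/eqP.
apply/forallP=> i; apply/forallP=> j; rewrite mxE.
by case: i => [[|[|i]] Hi] //; case: j => [[|[|j]] Hj] //=; rewrite subr0.
Qed.

Lemma G2_mul M M' : inGamma2 M -> inGamma2 M' -> inGamma2 (M * M').
Proof.
rewrite (mk_eta M) (mk_eta M') mk_mul.
move: (M ord0 ord0) (M ord0 ord_max) (M ord_max ord0) (M ord_max ord_max) (M' ord0 ord0) (M' ord0 ord_max) (M' ord_max ord0) (M' ord_max ord_max).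
move=> a b c d a' b' c' d' /G2mk[h /dvdzP[x hx] /dvdzP[y hy] /dvdzP[z hz] /dvdzP[w hw]].
move=> /G2mk[h' /dvdzP[x' hx'] /dvdzP[y' hy'] /dvdzP[z' hz'] /dvdzP[w' hw']].
have ea : a = 2 * x + 1 by rewrite -[a](subrK 1) hx; ring.
have ed : d = 2 * w + 1 by rewrite -[d](subrK 1) hw; ring.
have ea' : a' = 2 * x' + 1 by rewrite -[a'](subrK 1) hx'; ring.
have ed' : d' = 2 * w' + 1 by rewrite -[d'](subrK 1) hw'; ring.
apply/G2mk; split.
- have -> : (a * a' + b * c') * (c * b' + d * d') - (a * b' + b * d') * (c * a' + d * c')
     = (a * d - b * c) * (a' * d' - b' * c') by ring.
  by rewrite h h' mulr1.
- apply/dvdzP; exists (2*x*x' + x + x' + 2*y*z').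
  by rewrite ea ea' hy hz'; ring.
- apply/dvdzP; exists ((2*x+1)*y' + y*(2*w'+1)).
  by rewrite ea ed' hy hy'; ring.
- apply/dvdzP; exists (z*(2*x'+1) + (2*w+1)*z').
  by rewrite ea' ed hz hz'; ring.
- apply/dvdzP; exists (2*z*y' + 2*w*w' + w + w').
  by rewrite ed ed' hz hy'; ring.
Qed.

Lemma G2_opp M : inGamma2 M -> inGamma2 (- M).
Proof.
rewrite (mk_eta M) mkN.
move: (M ord0 ord0) (M ord0 ord_max) (M ord_max ord0) (M ord_max ord_max) => a b c d /G2mk[h h1 h2 h3 h4].
apply/G2mk; split; lia.
Qed.

Lemma G2_det M : inGamma2 M -> \det M = 1.
Proof. by case/andP=> /eqP. Qed.

Lemma G2_inv M : inGamma2 M -> M^-1 = mk (M ord_max ord_max) (- M ord0 ord_max) (- M ord_max ord0) (M ord0 ord0) /\ inGamma2 M^-1.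
Proof.
move=> HM.
suff E : M^-1 = mk (M ord_max ord_max) (- M ord0 ord_max) (- M ord_max ord0) (M ord0 ord0).
  split=> //; rewrite E; move: HM; rewrite {1}(mk_eta M).
  move: (M ord0 ord0) (M ord0 ord_max) (M ord_max ord0) (M ord_max ord_max) => a b c d /G2mk[h h1 h2 h3 h4].
  apply/G2mk; split; lia.
move: HM; rewrite {1}(mk_eta M) => /G2mk[h _ _ _ _].
by rewrite {1}(mk_eta M) mk_inv.
Qed.
Inductive letter := LA | LAi | LB | LBi.
Definition Lmx l := match l with
  | LA => mk 1 2 0 1 | LAi => mk 1 (-2) 0 1 | LB => mk 1 0 2 1 | LBi => mk 1 0 (-2) 1 end.
Definition evalw (w : seq letter) := foldl (fun M l => M * Lmx l) 1 w.

Lemma foldl_mul M w : foldl (fun M l => M * Lmx l) M w = M * evalw w.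
Proof.
rewrite /evalw; elim: w M => [|l w IH] M /=; first by rewrite mulr1.
by rewrite IH [in RHS]IH mul1r mulrA.
Qed.

Lemma evalw_cons l w : evalw (l :: w) = Lmx l * evalw w.
Proof. by rewrite {1}/evalw /= foldl_mul mul1r. Qed.

Lemma evalw_cat w1 w2 : evalw (w1 ++ w2) = evalw w1 * evalw w2.
Proof. by rewrite {1}/evalw foldl_cat foldl_mul. Qed.

Lemma evalw_rcons w l : evalw (rcons w l) = evalw w * Lmx l.
Proof. by rewrite -cats1 evalw_cat evalw_cons /evalw /= mulr1. Qed.

Definition repw (M : 'M[int]_2) := exists w, M = evalw w \/ M = - evalw w.

Lemma step_l l a b c d a' b' c' d' :
  mk a b c d = Lmx l * mk a' b' c' d' -> repw (mk a' b' c' d') -> repw (mk a b c d).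
Proof.
move=> E [w [H|H]]; exists (l :: w); rewrite evalw_cons E H; [left|right]=> //.
by rewrite mulrN.
Qed.

Lemma ad1 (a d : int) : a * d = 1 -> (a = 1 /\ d = 1) \/ (a = -1 /\ d = -1).
Proof.
move=> h; have: (absz a * absz d = 1)%N by rewrite -abszM h.
move/eqP; rewrite muln_eq1 => /andP[/eqP h1 /eqP h2]; lia.
Qed.

Lemma sanov_c0 m : forall b e, (absz b <= m)%N -> (2 %| b)%Z -> (e = 1 \/ e = -1) ->
  repw (mk e b 0 e).
Proof.
elim: m => [|m IH] b e hb h2 he.
  have -> : b = 0 by lia.
  case: he => ->; exists [::]; [left|right]; rewrite /evalw /= -mk1 //.
  by rewrite mkN oppr0.
have [->|bn0] := eqVneq b 0.
  case: he => ->; exists [::]; [left|right]; rewrite /evalw /= -mk1 //.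
  by rewrite mkN oppr0.
have [Hs|Hs] : (absz (b - 2 * e)%R < absz b)%N \/ (absz (b + 2 * e)%R < absz b)%N by lia.
  apply: (@step_l LA _ _ _ _ e (b - 2 * e) 0 e).
    by rewrite /= mk_mul; congr mk; ring.
  apply: IH => //; lia.
apply: (@step_l LAi _ _ _ _ e (b + 2 * e) 0 e).
  by rewrite /= mk_mul; congr mk; ring.
apply: IH => //; lia.
Qed.

Lemma sanov_aux n : forall a b c d, (absz a + absz c <= n)%N -> a * d - b * c = 1 ->
  (2 %| a - 1)%Z -> (2 %| b)%Z -> (2 %| c)%Z -> repw (mk a b c d).
Proof.
elim: n => [|n IH] a b c d hn h h1 h2 h3; first lia.
have [c0|cn0] := eqVneq c 0.
  subst c; have : a * d = 1 by rewrite -h; ring.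
  case/ad1=> [[-> ->]|[-> ->]]; apply: (@sanov_c0 (absz b)) => //; by [left|right].
have [hac|hca] : (absz c < absz a)%N \/ (absz a < absz c)%N by lia.
  have [Hs|Hs] : (absz (a - 2 * c)%R < absz a)%N \/ (absz (a + 2 * c)%R < absz a)%N by lia.
    apply: (@step_l LA _ _ _ _ (a - 2 * c) (b - 2 * d) c d).
      by rewrite /= mk_mul; congr mk; ring.
    apply: IH => //; try lia; by rewrite -h; ring.
  apply: (@step_l LAi _ _ _ _ (a + 2 * c) (b + 2 * d) c d).
    by rewrite /= mk_mul; congr mk; ring.
  apply: IH => //; try lia; by rewrite -h; ring.
have [Hs|Hs] : (absz (c - 2 * a)%R < absz c)%N \/ (absz (c + 2 * a)%R < absz c)%N by lia.
  apply: (@step_l LB _ _ _ _ a b (c - 2 * a) (d - 2 * b)).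
    by rewrite /= mk_mul; congr mk; ring.
  apply: IH => //; try lia; by rewrite -h; ring.
apply: (@step_l LBi _ _ _ _ a b (c + 2 * a) (d + 2 * b)).
  by rewrite /= mk_mul; congr mk; ring.
apply: IH => //; try lia; by rewrite -h; ring.
Qed.

Lemma sanov M : inGamma2 M -> repw M.
Proof.
rewrite {1 2}(mk_eta M) => /G2mk[h h1 h2 h3 h4].
exact: (@sanov_aux (absz (M ord0 ord0) + absz (M ord_max ord0))).
Qed.
Record st := St { sa : int; sb : int; se : int; sf : int; sp1 : int; sp2 : int; sc : int }.
Definition st0 := St 0 0 0 0 0 0 0.
Definition act (s : st) (l : letter) : st :=
  let: St a b e f p1 p2 c := s in
  match l with
  | LA => St (a+1) b (e+a) f (p1 + a*b) (p2 + f) (c - b)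
  | LAi => St (a-1) b (e-(a-1)) f (p1 - (a-1)*b) (p2 - f) (c + b)
  | LB => St a (b+1) e (f+b) p1 p2 c
  | LBi => St a (b-1) e (f-(b-1)) p1 p2 c
  end.
Definition stw w := foldl act st0 w.
Definition star (s t : st) : st :=
  St (sa s + sa t) (sb s + sb t) (se s + se t + sa s * sa t) (sf s + sf t + sb s * sb t)
     (sp1 s + sp1 t + sa s * sb s * sa t - sa s * sc t + sb s * se t)
     (sp2 s + sp2 t + sa t * sf s - sb s * sc t) (sc s + sc t - sb s * sa t).

Lemma act_star s t l : act (star s t) l = star s (act t l).
Proof. by case: s => *; case: t => *; case: l; rewrite /star /=; congr St; ring. Qed.

Lemma star0 s : star s st0 = s.
Proof. by case: s => *; rewrite /star /=; congr St; ring. Qed.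

Lemma foldl_star s w : foldl act s w = star s (stw w).
Proof.
elim/last_ind: w => [|w l IH]; first by rewrite /stw /= star0.
by rewrite /stw !foldl_rcons IH act_star.
Qed.

Fixpoint wpow (w : seq letter) n := if n is n'.+1 then wpow w n' ++ w else [::].

Lemma evalw_pow w n : evalw (wpow w n) = evalw w ^+ n.
Proof.
elim: n => [|n IH] /=; first by rewrite expr0.
by rewrite evalw_cat IH exprSr.
Qed.

Fixpoint c2 n : int := if n is n'.+1 then c2 n' + n'%:Z else 0.
Fixpoint c3 n : int := if n is n'.+1 then c3 n' + c2 n' else 0.

Lemma c2_2 n : 2 * c2 n = n%:Z * (n%:Z - 1).
Proof. by elim: n => [|n IH] //=; rewrite mulrDr IH intS; ring. Qed.

Lemma stw_pow w n :
  stw (wpow w n) = St (n%:Z * sa (stw w)) (n%:Z * sb (stw w))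
   (n%:Z * se (stw w) + sa (stw w) ^+ 2 * c2 n)
   (n%:Z * sf (stw w) + sb (stw w) ^+ 2 * c2 n)
   (n%:Z * sp1 (stw w) + sa (stw w) ^+ 2 * sb (stw w) * (2 * c3 n + c2 n)
      - sa (stw w) * sc (stw w) * c2 n + sb (stw w) * se (stw w) * c2 n)
   (n%:Z * sp2 (stw w) + sa (stw w) * (sf (stw w) * c2 n + sb (stw w) ^+ 2 * c3 n)
      - sb (stw w) * sc (stw w) * c2 n)
   (n%:Z * sc (stw w) - sa (stw w) * sb (stw w) * c2 n).
Proof.
elim: n => [|n IH] /=; first by rewrite /stw /=; congr St; ring.
rewrite {1}/stw foldl_cat -/(stw (wpow w n)) foldl_star IH.
have H2 := c2_2 n.
have E : 2 * (c3 n + c2 n) + (c2 n + n%:Z) = 2 * c3 n + c2 n + n%:Z * n%:Z by lia.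
move: (stw w) => [a b e f p1 p2 c] /=; rewrite /star /= intS E; congr St; ring.
Qed.

Definition T (b : int) : int := ((b * (b - 1)) %/ 2)%Z.
Lemma TS b : T (b + 1) = T b + b.
Proof.
rewrite /T; have -> : (b + 1) * (b + 1 - 1) = b * 2 + b * (b - 1) by ring.
by rewrite divzMDl // addrC.
Qed.
Lemma TP b : T (b - 1) = T b - (b - 1).
Proof. by rewrite -{2}(subrK 1 b) TS; ring. Qed.
Lemma T0 : T 0 = 0.
Proof. by []. Qed.

Lemma stw_inv w : sf (stw w) = T (sb (stw w)).
Proof.
elim/last_ind: w => [|w l IH]; first by [].
rewrite /stw foldl_rcons -/(stw w); move: IH.
case: (stw w) => a b e f p1 p2 c /= ->.
by case: l => /=; rewrite ?TS ?TP.
Qed.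
Lemma c3_6 n : 6 * c3 n = n%:Z * (n%:Z - 1) * (n%:Z - 2).
Proof.
elim: n => [|n IH] //=; have H := c2_2 n.
rewrite mulrDr IH intS.
have -> : 6 * c2 n = 3 * (2 * c2 n) by ring.
rewrite H; ring.
Qed.

Lemma NpE N : Nprime N = if odd N then N else N./2.
Proof. by []. Qed.
Lemma NsE N : Nsecond N = if (3 %| N)%N then (Nprime N %/ 3)%N else Nprime N.
Proof. by rewrite /Nsecond coprime_sym prime_coprime //; case: (3 %| N)%N. Qed.

Lemma divs N : [/\ (Nprime N %| N)%N, (Nsecond N %| Nprime N)%N,
  ((Nprime N)%:Z %| c2 N)%Z & ((Nsecond N)%:Z %| c3 N)%Z].
Proof.
have H2 := c2_2 N; have H3 := c3_6 N.
have E := divn_eq N 6; have L : (N %% 6 < 6)%N by rewrite ltn_pmod.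
move: (N %/ 6)%N (N %% 6)%N E L H2 H3 => q r E L H2 H3.
rewrite NsE NpE.
have [Hr|[Hr|[Hr|[Hr|[Hr|Hr]]]]] : r = 0%N \/ r = 1%N \/ r = 2%N \/ r = 3%N \/ r = 4%N \/ r = 5%N by lia.
- have -> : odd N = false by lia.
  have -> : N./2 = (3 * q)%N by lia.
  have -> : (3 %| N)%N = true by lia.
  have -> : (3 * q %/ 3 = q)%N by lia.
  split.
  + by apply/dvdnP; exists 2%N; lia.
  + by apply/dvdnP; exists 3%N; lia.
  + by apply/dvdzP; exists (6 * q%:Z - 1); lia.
  + by apply/dvdzP; exists ((6 * q%:Z - 1) * (6 * q%:Z - 2)); lia.
- have -> : odd N = true by lia.
  have -> : (3 %| N)%N = false by lia.
  split.
  + by apply/dvdnP; exists 1%N; lia.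
  + by apply/dvdnP; exists 1%N; lia.
  + by apply/dvdzP; exists (3 * q%:Z); lia.
  + by apply/dvdzP; exists (q%:Z * (6 * q%:Z - 1)); lia.
- have -> : odd N = false by lia.
  have -> : N./2 = (3 * q + 1)%N by lia.
  have -> : (3 %| N)%N = false by lia.
  split.
  + by apply/dvdnP; exists 2%N; lia.
  + by apply/dvdnP; exists 1%N; lia.
  + by apply/dvdzP; exists (6 * q%:Z + 1); lia.
  + by apply/dvdzP; exists ((6 * q%:Z + 1) * (2 * q%:Z)); lia.
- have -> : odd N = true by lia.
  have -> : (3 %| N)%N = true by lia.
  have -> : (N %/ 3 = 2 * q + 1)%N by lia.
  split.
  + by apply/dvdnP; exists 1%N; lia.
  + by apply/dvdnP; exists 3%N; lia.
  + by apply/dvdzP; exists (3 * q%:Z + 1); lia.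
  + by apply/dvdzP; exists ((3 * q%:Z + 1) * (6 * q%:Z + 1)); lia.
- have -> : odd N = false by lia.
  have -> : N./2 = (3 * q + 2)%N by lia.
  have -> : (3 %| N)%N = false by lia.
  split.
  + by apply/dvdnP; exists 2%N; lia.
  + by apply/dvdnP; exists 1%N; lia.
  + by apply/dvdzP; exists (6 * q%:Z + 3); lia.
  + by apply/dvdzP; exists ((2 * q%:Z + 1) * (6 * q%:Z + 2)); lia.
- have -> : odd N = true by lia.
  have -> : (3 %| N)%N = false by lia.
  split.
  + by apply/dvdnP; exists 1%N; lia.
  + by apply/dvdnP; exists 1%N; lia.
  + by apply/dvdzP; exists (3 * q%:Z + 2); lia.
  + by apply/dvdzP; exists ((3 * q%:Z + 2) * (2 * q%:Z + 1)); lia.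
Qed.
Definition eqm (m : nat) (x y : int) := (m%:Z %| x - y)%Z.
Lemma eqmodE m x y : eqmod m x y <-> eqm m x y.
Proof. by rewrite /eqmod /eqm -eqz_mod_dvd; split => [->|/eqP]. Qed.
Lemma eqmP m x y : eqm m x y <-> exists k : int, x = y + k * m%:Z.
Proof.
rewrite /eqm; split.
  by case/dvdzP=> k hk; exists k; rewrite -hk; ring.
by case=> k ->; apply/dvdzP; exists k; ring.
Qed.
Lemma eqm_dvd m m' x y : (m' %| m)%N -> eqm m x y -> eqm m' x y.
Proof. by move=> h; apply: dvdz_trans; rewrite dvdzE. Qed.
Lemma eqm_refl m x : eqm m x x.
Proof. by rewrite /eqm subrr dvdz0. Qed.
Lemma eqm0 m x : (m%:Z %| x)%Z -> eqm m x 0.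
Proof. by rewrite /eqm subr0. Qed.


Section Main.
Variables (N : nat) (phi : 'M[int]_2 -> int * int) (psi : 'M[int]_2 -> int * int * int).
Hypothesis Hphi : is_phi N phi.
Hypothesis Hpsi : is_psibar N phi psi.

Ltac gen1 t := let u := fresh "u" in let E := fresh "E" in remember t as u eqn:E in *; clear E.
Ltac gen := repeat match goal with
  | |- context [(phi ?y).1] => gen1 (phi y).1
  | H : context [(phi ?y).1] |- _ => gen1 (phi y).1
  | |- context [(phi ?y).2] => gen1 (phi y).2
  | H : context [(phi ?y).2] |- _ => gen1 (phi y).2
  | |- context [(psi ?y).1.1] => gen1 (psi y).1.1
  | H : context [(psi ?y).1.1] |- _ => gen1 (psi y).1.1
  | |- context [(psi ?y).1.2] => gen1 (psi y).1.2
  | H : context [(psi ?y).1.2] |- _ => gen1 (psi y).1.2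
  | |- context [(psi ?y).2] => gen1 (psi y).2
  | H : context [(psi ?y).2] |- _ => gen1 (psi y).2
  end.
Ltac glia := gen; lia.

Definition phiv x a b := eqm N (phi x).1 a /\ eqm N (phi x).2 b.
Definition psiv x u v w :=
  [/\ eqm (Nprime N) (psi x).1.1 u, eqm (Nprime N) (psi x).1.2 v & eqm (Nprime N) (psi x).2 w].

Lemma inPhiE x : inPhi N phi x <-> inGamma2 x /\ phiv x 0 0.
Proof. by rewrite /inPhi /phiv !eqmodE. Qed.

Lemma G2_1 : inGamma2 1.
Proof. by rewrite -mk1; apply/G2mk; split; lia. Qed.

Lemma phiv_mul x y a b a' b' : inGamma2 x -> inGamma2 y -> phiv x a b -> phiv y a' b' ->
  phiv (x * y) (a + a') (b + b').
Proof.
case: Hphi => H1 _ _ _ hx hy [/eqmP[k1 e1] /eqmP[k2 e2]] [/eqmP[k3 e3] /eqmP[k4 e4]].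
case: (H1 x y hx hy) => /eqmodE/eqmP[k5 e5] /eqmodE/eqmP[k6 e6].
split; apply/eqmP; [exists (k5 + k1 + k3)|exists (k6 + k2 + k4)]; glia.
Qed.

Lemma phiv_1 : phiv 1 0 0.
Proof.
case: Hphi => H1 _ _ _.
case: (H1 1 1 G2_1 G2_1) => /eqmodE/eqmP[k1 e1] /eqmodE/eqmP[k2 e2].
rewrite mulr1 in e1 e2.
split; apply/eqmP; [exists (- k1)|exists (- k2)]; glia.
Qed.

Lemma phiv_inv x a b : inGamma2 x -> phiv x a b -> phiv x^-1 (- a) (- b).
Proof.
move=> hx [/eqmP[k1 e1] /eqmP[k2 e2]].
have [_ hi] := G2_inv hx.
have U : x \is a GRing.unit by rewrite unitmxE (G2_det hx) unitr1.
case: Hphi => H1 _ _ _.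
case: (H1 x x^-1 hx hi) => /eqmodE/eqmP[k5 e5] /eqmodE/eqmP[k6 e6].
case: phiv_1 => /eqmP[k7 e7] /eqmP[k8 e8].
have E1 : phi (x * x^-1) = phi 1 by rewrite mulrV.
rewrite E1 in e5 e6.
split; apply/eqmP; [exists (k7 - k5 - k1)|exists (k8 - k6 - k2)]; glia.
Qed.

Lemma phiv_ext x a b a' b' : phiv x a b -> a = a' -> b = b' -> phiv x a' b'.
Proof. by move=> h <- <-. Qed.

Lemma G2A k : inGamma2 (mk 1 (2 * k) 0 1).
Proof. by apply/G2mk; split; lia. Qed.
Lemma G2B k : inGamma2 (mk 1 0 (2 * k) 1).
Proof. by apply/G2mk; split; lia. Qed.

Lemma phiv_A k : phiv (mk 1 (2 * k) 0 1) k 0.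
Proof.
have H1 : phiv (mk 1 2 0 1) 1 0.
  case: Hphi => _ _ [/eqmodE h1 /eqmodE h2] _; rewrite mxAE in h1 h2; by split.
have Hn : forall n : nat, phiv (mk 1 (2 * n%:Z) 0 1) n%:Z 0.
  elim=> [|n IH]; first by rewrite mulr0 mk1; exact: phiv_1.
  have -> : mk 1 (2 * n.+1%:Z) 0 1 = mk 1 (2 * n%:Z) 0 1 * mk 1 2 0 1.
    by rewrite mk_mul intS; congr mk; ring.
  apply: (phiv_ext (phiv_mul (G2A _) _ IH H1)); rewrite ?intS; try ring.
  by apply/G2mk; split; lia.
case: k => n; first exact: Hn.
have -> : mk 1 (2 * Negz n) 0 1 = (mk 1 (2 * n.+1%:Z) 0 1)^-1.
  by rewrite mk_inv ?NegzE; [congr mk; ring | ring].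
apply: (phiv_ext (phiv_inv (G2A _) (Hn n.+1))); by rewrite ?NegzE ?oppr0.
Qed.

Lemma phiv_B k : phiv (mk 1 0 (2 * k) 1) 0 k.
Proof.
have H1 : phiv (mk 1 0 2 1) 0 1.
  case: Hphi => _ _ _ [/eqmodE h1 /eqmodE h2]; rewrite mxBE in h1 h2; by split.
have Hn : forall n : nat, phiv (mk 1 0 (2 * n%:Z) 1) 0 n%:Z.
  elim=> [|n IH]; first by rewrite mulr0 mk1; exact: phiv_1.
  have -> : mk 1 0 (2 * n.+1%:Z) 1 = mk 1 0 (2 * n%:Z) 1 * mk 1 0 2 1.
    by rewrite mk_mul intS; congr mk; ring.
  apply: (phiv_ext (phiv_mul (G2B _) _ IH H1)); rewrite ?intS; try ring.
  by apply/G2mk; split; lia.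
case: k => n; first exact: Hn.
have -> : mk 1 0 (2 * Negz n) 1 = (mk 1 0 (2 * n.+1%:Z) 1)^-1.
  by rewrite mk_inv ?NegzE; [congr mk; ring | ring].
apply: (phiv_ext (phiv_inv (G2B _) (Hn n.+1))); by rewrite ?NegzE ?oppr0.
Qed.

Lemma psiv_ext x u v w u' v' w' : psiv x u v w -> u = u' -> v = v' -> w = w' -> psiv x u' v' w'.
Proof. by move=> h <- <- <-. Qed.

Lemma inPhi_mul x y : inPhi N phi x -> inPhi N phi y -> inPhi N phi (x * y).
Proof.
move=> /inPhiE[hx px] /inPhiE[hy py]; apply/inPhiE; split; first exact: G2_mul.
exact: (phiv_ext (phiv_mul hx hy px py)).
Qed.

Lemma inPhi_1 : inPhi N phi 1.
Proof. by apply/inPhiE; split; [exact: G2_1 | exact: phiv_1]. Qed.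

Lemma psiv_mul x y u v w u' v' w' : inPhi N phi x -> inPhi N phi y ->
  psiv x u v w -> psiv y u' v' w' -> psiv (x * y) (u + u') (v + v') (w + w').
Proof.
case: Hpsi => H1 _ _ _ _ hx hy [/eqmP[k1 e1] /eqmP[k2 e2] /eqmP[k3 e3]] [/eqmP[k4 e4] /eqmP[k5 e5] /eqmP[k6 e6]].
case: (H1 x y hx hy) => /= /eqmodE/eqmP[k7 e7] /eqmodE/eqmP[k8 e8] /eqmodE/eqmP[k9 e9].
split; apply/eqmP; [exists (k7 + k1 + k4)|exists (k8 + k2 + k5)|exists (k9 + k3 + k6)]; glia.
Qed.

Lemma psiv_1 : psiv 1 0 0 0.
Proof.
case: Hpsi => H1 _ _ _ _.
case: (H1 1 1 inPhi_1 inPhi_1) => /= /eqmodE/eqmP[k7 e7] /eqmodE/eqmP[k8 e8] /eqmodE/eqmP[k9 e9].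
rewrite mulr1 in e7 e8 e9.
split; apply/eqmP; [exists (- k7)|exists (- k8)|exists (- k9)]; glia.
Qed.

Lemma inPhi_inv x : inPhi N phi x -> inPhi N phi x^-1.
Proof.
move=> /inPhiE[hx px]; apply/inPhiE; split; first by case: (G2_inv hx).
by apply: (phiv_ext (phiv_inv hx px)); rewrite oppr0.
Qed.

Lemma psiv_inv x u v w : inPhi N phi x -> psiv x u v w -> psiv x^-1 (- u) (- v) (- w).
Proof.
move=> hx [/eqmP[k1 e1] /eqmP[k2 e2] /eqmP[k3 e3]].
have hi := inPhi_inv hx.
have U : x \is a GRing.unit by case: hx => hx _; rewrite unitmxE (G2_det hx) unitr1.
case: Hpsi => H1 _ _ _ _.
case: (H1 x x^-1 hx hi) => /= /eqmodE/eqmP[k7 e7] /eqmodE/eqmP[k8 e8] /eqmodE/eqmP[k9 e9].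
have E1 : psi (x * x^-1) = psi 1 by rewrite mulrV.
rewrite E1 in e7 e8 e9.
case: psiv_1 => /eqmP[k4 e4] /eqmP[k5 e5] /eqmP[k6 e6].
split; apply/eqmP; [exists (k4 - k7 - k1)|exists (k5 - k8 - k2)|exists (k6 - k9 - k3)]; glia.
Qed.

Lemma inPhi_opp x : inPhi N phi x -> inPhi N phi (- x).
Proof.
move=> /inPhiE[hx [/eqmP[k1 e1] /eqmP[k2 e2]]]; apply/inPhiE; split; first exact: G2_opp.
case: Hphi => _ H2 _ _; case: (H2 x hx) => /eqmodE/eqmP[k3 e3] /eqmodE/eqmP[k4 e4].
split; apply/eqmP; [exists (k3 + k1)|exists (k4 + k2)]; glia.
Qed.

Lemma psiv_opp x u v w : inPhi N phi x -> psiv x u v w -> psiv (- x) u v w.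
Proof.
move=> hx [/eqmP[k1 e1] /eqmP[k2 e2] /eqmP[k3 e3]].
case: Hpsi => _ H2 _ _ _; case: (H2 x hx) => /eqmodE/eqmP[k7 e7] /eqmodE/eqmP[k8 e8] /eqmodE/eqmP[k9 e9].
split; apply/eqmP; [exists (k7 + k1)|exists (k8 + k2)|exists (k9 + k3)]; glia.
Qed.

Lemma phiv_eqm0 x (k : int) : phiv x (N%:Z * k) 0 -> phiv x 0 0.
Proof.
move=> [/eqmP[k1 e1] /eqmP[k2 e2]]; split; apply/eqmP; [exists (k1 + k)|exists k2]; glia.
Qed.
Lemma phiv_eqm0' x (k : int) : phiv x 0 (N%:Z * k) -> phiv x 0 0.
Proof.
move=> [/eqmP[k1 e1] /eqmP[k2 e2]]; split; apply/eqmP; [exists k1|exists (k2 + k)]; glia.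
Qed.

Lemma AN k : inPhi N phi (mk 1 (2 * (N%:Z * k)) 0 1) /\ psiv (mk 1 (2 * (N%:Z * k)) 0 1) 0 0 0.
Proof.
have I k' : inPhi N phi (mk 1 (2 * (N%:Z * k')) 0 1).
  by apply/inPhiE; split; [exact: G2A | exact: (phiv_eqm0 (phiv_A _))].
have H1 : psiv (mk 1 (2 * N%:Z) 0 1) 0 0 0.
  case: Hpsi => _ _ H3 _ _; have E : mxA ^+ N = mk 1 (2 * N%:Z) 0 1 := powA N.
  by rewrite E in H3; case: H3 => /eqmodE ? /eqmodE ? /eqmodE ?; split.
have Hn : forall n : nat, psiv (mk 1 (2 * (N%:Z * n%:Z)) 0 1) 0 0 0.
  elim=> [|n IH]; first by rewrite mulr0 mulr0 mk1; exact: psiv_1.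
  have -> : mk 1 (2 * (N%:Z * n.+1%:Z)) 0 1 = mk 1 (2 * (N%:Z * n%:Z)) 0 1 * mk 1 (2 * N%:Z) 0 1.
    by rewrite mk_mul intS; congr mk; ring.
  have IN : inPhi N phi (mk 1 (2 * N%:Z) 0 1) by have := I 1; rewrite mulr1.
  by apply: (psiv_ext (psiv_mul (I _) IN IH H1)); rewrite addr0.
split; first exact: I.
case: k => n; first exact: Hn.
have -> : mk 1 (2 * (N%:Z * Negz n)) 0 1 = (mk 1 (2 * (N%:Z * n.+1%:Z)) 0 1)^-1.
  by rewrite mk_inv ?NegzE; [congr mk; ring | ring].
by apply: (psiv_ext (psiv_inv (I _) (Hn n.+1))); rewrite oppr0.
Qed.

Lemma BN k : inPhi N phi (mk 1 0 (2 * (N%:Z * k)) 1) /\ psiv (mk 1 0 (2 * (N%:Z * k)) 1) 0 0 0.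
Proof.
have I k' : inPhi N phi (mk 1 0 (2 * (N%:Z * k')) 1).
  by apply/inPhiE; split; [exact: G2B | exact: (phiv_eqm0' (phiv_B _))].
have H1 : psiv (mk 1 0 (2 * N%:Z) 1) 0 0 0.
  case: Hpsi => _ _ _ H3 _; have E : mxB ^+ N = mk 1 0 (2 * N%:Z) 1 := powB N.
  by rewrite E in H3; case: H3 => /eqmodE ? /eqmodE ? /eqmodE ?; split.
have Hn : forall n : nat, psiv (mk 1 0 (2 * (N%:Z * n%:Z)) 1) 0 0 0.
  elim=> [|n IH]; first by rewrite mulr0 mulr0 mk1; exact: psiv_1.
  have -> : mk 1 0 (2 * (N%:Z * n.+1%:Z)) 1 = mk 1 0 (2 * (N%:Z * n%:Z)) 1 * mk 1 0 (2 * N%:Z) 1.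
    by rewrite mk_mul intS; congr mk; ring.
  have IN : inPhi N phi (mk 1 0 (2 * N%:Z) 1) by have := I 1; rewrite mulr1.
  by apply: (psiv_ext (psiv_mul (I _) IN IH H1)); rewrite addr0.
split; first exact: I.
case: k => n; first exact: Hn.
have -> : mk 1 0 (2 * (N%:Z * Negz n)) 1 = (mk 1 0 (2 * (N%:Z * n.+1%:Z)) 1)^-1.
  by rewrite mk_inv ?NegzE; [congr mk; ring | ring].
by apply: (psiv_ext (psiv_inv (I _) (Hn n.+1))); rewrite oppr0.
Qed.

Lemma conj_inPhi a b Cm : inPhi N phi Cm ->
  inPhi N phi (mk 1 (2 * a) 0 1 * mk 1 0 (2 * b) 1 * Cm * mk 1 0 (2 * - b) 1 * mk 1 (2 * - a) 0 1).
Proof.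
move=> /inPhiE[hc pc]; apply/inPhiE.
have g1 := G2_mul (G2A a) (G2B b).
have g2 := G2_mul g1 hc.
have g3 := G2_mul g2 (G2B (- b)).
split; first exact: (G2_mul g3 (G2A (- a))).
have p1 := phiv_mul (G2A a) (G2B b) (phiv_A a) (phiv_B b).
have p2 := phiv_mul g1 hc p1 pc.
have p3 := phiv_mul g2 (G2B (- b)) p2 (phiv_B (- b)).
have p4 := phiv_mul g3 (G2A (- a)) p3 (phiv_A (- a)).
by apply: (phiv_ext p4); ring.
Qed.

Lemma inPhi_prod4 a b c d : inGamma2 a -> inGamma2 b -> inGamma2 c -> inGamma2 d ->
  forall a1 a2 b1 b2 c1 c2 d1 d2, phiv a a1 a2 -> phiv b b1 b2 -> phiv c c1 c2 -> phiv d d1 d2 ->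
  a1 + b1 + c1 + d1 = 0 -> a2 + b2 + c2 + d2 = 0 -> inPhi N phi (a * b * c * d).
Proof.
move=> ga gb gc gd a1 a2 b1 b2 c1 c2 d1 d2 pa pb pc pd e1 e2; apply/inPhiE.
have g1 := G2_mul ga gb; have g2 := G2_mul g1 gc.
split; first exact: G2_mul.
have p1 := phiv_mul ga gb pa pb; have p2 := phiv_mul g1 gc p1 pc.
exact: (phiv_ext (phiv_mul g2 gd p2 pd)).
Qed.

Lemma Cinv_inPhi : inPhi N phi (mk (-3) 8 (-8) 21).
Proof.
have -> : mk (-3) 8 (-8) 21 = mk 1 0 (2 * 1) 1 * mk 1 (2 * 1) 0 1 * mk 1 0 (2 * -1) 1 * mk 1 (2 * -1) 0 1.
  by rewrite !mk_mul; congr mk; ring.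
apply: (inPhi_prod4 (G2B _) (G2A _) (G2B _) (G2A _) (phiv_B _) (phiv_A _) (phiv_B _) (phiv_A _)); ring.
Qed.

Lemma C_inPhi : inPhi N phi (mk 21 (-8) 8 (-3)).
Proof.
have -> : mk 21 (-8) 8 (-3) = mk 1 (2 * 1) 0 1 * mk 1 0 (2 * 1) 1 * mk 1 (2 * -1) 0 1 * mk 1 0 (2 * -1) 1.
  by rewrite !mk_mul; congr mk; ring.
apply: (inPhi_prod4 (G2A _) (G2B _) (G2A _) (G2B _) (phiv_A _) (phiv_B _) (phiv_A _) (phiv_B _)); ring.
Qed.

Definition Xm a b := mk 1 (2 * a) 0 1 * mk 1 0 (2 * b) 1 * mk (-3) 8 (-8) 21 * mk 1 0 (2 * - b) 1 * mk 1 (2 * - a) 0 1.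
Definition Xp a b := mk 1 (2 * a) 0 1 * mk 1 0 (2 * b) 1 * mk 21 (-8) 8 (-3) * mk 1 0 (2 * - b) 1 * mk 1 (2 * - a) 0 1.

Lemma Xm_prop a b : inPhi N phi (Xm a b) /\ psiv (Xm a b) a b (-1).
Proof.
split; first exact: (conj_inPhi _ _ Cinv_inPhi).
case: Hpsi => _ _ _ _ H5; have := H5 a b (-1).
rewrite !powA !powB powCm1 -/(Xm a b) => -[/eqmodE h1 /eqmodE h2 /eqmodE h3].
have P : psiv (Xm a b) (- (a * -1)) (- (b * -1)) (-1) by split.
by apply: (psiv_ext P); ring.
Qed.

Lemma Xp_prop a b : inPhi N phi (Xp a b) /\ psiv (Xp a b) (- a) (- b) 1.
Proof.
split; first exact: (conj_inPhi _ _ C_inPhi).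
case: Hpsi => _ _ _ _ H5; have := H5 a b 1.
rewrite !powA !powB powC1 -/(Xp a b) => -[/eqmodE h1 /eqmodE h2 /eqmodE h3].
have P : psiv (Xp a b) (- (a * 1)) (- (b * 1)) 1 by split.
by apply: (psiv_ext P); ring.
Qed.

Definition ymx a b := mk 1 (2 * a) 0 1 * mk 1 0 (2 * b) 1 * mk 1 2 0 1 * mk 1 0 (2 * - b) 1
  * mk 1 (-2) 0 1 * mk 1 (2 * - a) 0 1.

Lemma ylemma a b : inPhi N phi (ymx a b) /\ psiv (ymx a b) (a * b) (T b) (- b).
Proof.
have up b' : ymx a (b' + 1) = Xm a b' * ymx a b'.
  by rewrite /ymx /Xm !mk_mul; congr mk; ring.
have down b' : ymx a b' = Xp a b' * ymx a (b' + 1).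
  by rewrite /ymx /Xp !mk_mul; congr mk; ring.
have y0 : ymx a 0 = 1 by rewrite /ymx !mk_mul -mk1; congr mk; ring.
have Hn : forall n : nat, inPhi N phi (ymx a n) /\ psiv (ymx a n) (a * n) (T n) (- n%:Z).
  elim=> [|n [I P]]; first by rewrite y0; split; [exact: inPhi_1 | apply: (psiv_ext psiv_1); rewrite ?mulr0 ?oppr0].
  rewrite intS addrC up; case: (Xm_prop a n) => IX PX.
  split; first exact: inPhi_mul.
  by apply: (psiv_ext (psiv_mul IX I PX P)); rewrite ?TS; ring.
have Hm : forall n : nat, inPhi N phi (ymx a (- n%:Z)) /\ psiv (ymx a (- n%:Z)) (a * - n%:Z) (T (- n%:Z)) (n%:Z).
  elim=> [|n [I P]]; first by rewrite oppr0 y0; split; [exact: inPhi_1 | apply: (psiv_ext psiv_1); rewrite ?mulr0 ?oppr0].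
  have E : - n.+1%:Z = - n%:Z - 1 by rewrite intS; ring.
  rewrite E down (_ : - n%:Z - 1 + 1 = - n%:Z); last by ring.
  case: (Xp_prop a (- n%:Z - 1)) => IX PX.
  split; first exact: inPhi_mul.
  by apply: (psiv_ext (psiv_mul IX I PX P)); rewrite ?TP ?intS; ring.
case: b => n; first by case: (Hn n) => I P; split=> //; apply: (psiv_ext P) => //.
rewrite NegzE; case: (Hm n.+1) => I P; split=> //; apply: (psiv_ext P) => //; ring.
Qed.

Definition Rep M s := exists h, inPhi N phi h /\
  M = h * mk 1 (2 * sa s) 0 1 * mk 1 0 (2 * sb s) 1 /\ psiv h (sp1 s) (sp2 s) (sc s).

Lemma Rep_step M s l : Rep M s -> sf s = T (sb s) -> Rep (M * Lmx l) (act s l).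
Proof.
case: s => a b e f p1 p2 c [h [Ih [-> Ph]]] /= Hf.
case: l => /=.
- case: (ylemma a b) => IY PY.
  exists (h * ymx a b); split; first exact: inPhi_mul.
  split; last by apply: (psiv_ext (psiv_mul Ih IY Ph PY)); rewrite /= ?Hf //; ring.
  rewrite -!mulrA; congr (h * _); rewrite /ymx !mk_mul /=; congr mk; ring.
- case: (ylemma (a - 1) b) => IY PY.
  exists (h * (ymx (a - 1) b)^-1); split; first exact: (inPhi_mul Ih (inPhi_inv IY)).
  split; last by apply: (psiv_ext (psiv_mul Ih (inPhi_inv IY) Ph (psiv_inv IY PY))); rewrite /= ?Hf //; ring.
  have U : ymx (a - 1) b \is a GRing.unit.
    by case: IY => /G2_det hd _; rewrite unitmxE hd unitr1.
  rewrite -!mulrA; congr (h * _); apply: (mulrI U); rewrite !mulrA (mulrV U) mul1r.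
  by rewrite /ymx !mk_mul /=; congr mk; ring.
- exists h; split=> //; split=> //.
  by rewrite -!mulrA; congr (h * _); rewrite !mk_mul /=; congr mk; ring.
- exists h; split=> //; split=> //.
  by rewrite -!mulrA; congr (h * _); rewrite !mk_mul /=; congr mk; ring.
Qed.

Lemma Rep_w w : Rep (evalw w) (stw w).
Proof.
elim/last_ind: w => [|w l IH].
  exists 1; split; first exact: inPhi_1.
  split; last exact: psiv_1.
  by rewrite /evalw /= !mulr0 mk1 !mulr1.
rewrite evalw_rcons /stw foldl_rcons -/(stw w).
exact: Rep_step (stw_inv w).
Qed.

End Main.

Lemma eqm_trans m x y z : eqm m x y -> eqm m y z -> eqm m x z.
Proof.
move=> /eqmP[k1 e1] /eqmP[k2 e2]; apply/eqmP; exists (k1 + k2); rewrite e1 e2; ring.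
Qed.

Lemma dvd3 (d : int) (n c2v c3v x y z : int) : (d %| n)%Z -> (d %| c2v)%Z -> (d %| c3v)%Z ->
  (d %| n * x + c2v * y + c3v * z)%Z.
Proof. by move=> h1 h2 h3; rewrite !rpredD // dvdz_mulr. Qed.

Theorem proposition10 (N : nat) (phi : 'M[int]_2 -> int * int)
    (psi : 'M[int]_2 -> int * int * int) :
  (1 <= N)%N -> is_phi N phi -> is_psibar N phi psi ->
  forall gamma : 'M[int]_2, inGamma2 gamma -> inPhi2 N phi psi (gamma ^+ N).
Proof.
move=> _ Hphi Hpsi gamma HG.
have [w Hw] := sanov HG.
have [h [Ih [E Ph]]] := Rep_w Hphi Hpsi (wpow w N).
rewrite evalw_pow stw_pow /= in E Ph.
move: E Ph; move: (stw w) => [a b e f q1 q2 c] /= E Ph.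
set P1 := (N%:Z * q1 + _ - _ + _) in Ph.
set P2 := (N%:Z * q2 + _ - _) in Ph.
set P3 := (N%:Z * c - _) in Ph.
have [h2 [I2 [E2 P2h]]] : exists h2, inPhi N phi h2 /\
   gamma ^+ N = h2 * mk 1 (2 * (N%:Z * a)) 0 1 * mk 1 0 (2 * (N%:Z * b)) 1 /\
   psiv N psi h2 P1 P2 P3.
  case: Hw => ->; first by exists h.
  rewrite exprNn E -signr_odd; case: (odd N); rewrite ?expr1 ?expr0 ?mulN1r ?mul1r.
    exists (- h); split; first exact: (inPhi_opp Hphi).
    by split; [rewrite !mulNr | exact: (psiv_opp Hpsi)].
  by exists h.
have [IA PA] := AN Hphi Hpsi a.
have [IB PB] := BN Hphi Hpsi b.
have I3 := inPhi_mul Hphi (inPhi_mul Hphi I2 IA) IB.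
have P4 := psiv_mul Hpsi (inPhi_mul Hphi I2 IA) IB (psiv_mul Hpsi I2 IA P2h PA) PB.
rewrite -E2 !addr0 in I3 P4.
case: P4 => e1 e2 e3.
have [d1 d2 d3 d4] := divs N.
have dNs : ((Nsecond N)%:Z %| N%:Z)%Z by rewrite dvdzE; exact: dvdn_trans d2 d1.
have dNp : ((Nprime N)%:Z %| N%:Z)%Z by rewrite dvdzE.
have d2s : ((Nsecond N)%:Z %| c2 N)%Z.
  by apply: dvdz_trans d3; rewrite dvdzE.
split=> //; apply/eqmodE.
- apply: eqm_trans (eqm_dvd d2 e1) _; apply: eqm0.
  have -> : P1 = N%:Z * q1 + c2 N * (a ^+ 2 * b - a * c + b * e) + c3 N * (2 * a ^+ 2 * b) by rewrite /P1; ring.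
  exact: dvd3.
- apply: eqm_trans (eqm_dvd d2 e2) _; apply: eqm0.
  have -> : P2 = N%:Z * q2 + c2 N * (a * f - b * c) + c3 N * (a * b ^+ 2) by rewrite /P2; ring.
  exact: dvd3.
- apply: eqm_trans e3 _; apply: eqm0.
  have -> : P3 = N%:Z * c + c2 N * (- (a * b)) + 0 * 0 by rewrite /P3; ring.
  by apply: dvd3 => //; apply: dvdz0.
Qed.
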